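(* Let $P$ and $Q$ be continuous $L$-ordered sets. (1) If $Y$ is an $L$-sobrification of $\Sigma_LP$, then $\Omega_LY$ is a directed completion of $P$. (2) If $Q$ is a directed completion of $P$, then $\Sigma_LQ$ is an $L$-sobrification of $\Sigma_LP$. (3) $Q$ is a directed completion of $P$ if and only if $\Sigma_LQ$ is an $L$-sobrification of $\Sigma_LP$.
   Context: $L$ is a frame with implication $\to$. $L$-subsets of $X$ are maps $X\to L$; nonempty means $\bigvee_xA(x)=1$; constants $a_X$; ${\rm sub}_X(A,B)=\bigwedge_xA(x)\to B(x)$; $f^\rightarrow(A)(y)=\bigvee_{f(x)=y}A(x)$, $f^\leftarrow(B)=B\circ f$. An $L$-topology on $X$: $\mathcal O(X)\subseteq L^X$ closed under finite meets and arbitrary joins containing all constants; continuity: $f^\leftarrow$ preserves openness. $T_0$: if $A(x)=A(y)$ for all open $A$ then $x=y$. Specialization $L$-order of a $T_0$ space: $e(x,y)=\bigwedge_{A\in\mathcal O(X)}A(x)\to A(y)$; $\Omega_LX$ is $X$ with this $L$-order. A point of $\mathcal O(X)$ is $p:\mathcal O(X)\to L$ preserving binary meets and arbitrary joins with $p(\lambda_X)=\lambda$; $[x](A)=A(x)$; $X$ is $L$-sober if $x\mapsto[x]$ is a bijection onto the points. An $L$-sobrification of $X$ is an $L$-sober space $Y$ with a continuous $j:X\to Y$ such that every continuous map from $X$ to an $L$-sober space $Z$ factors uniquely as $\bar f\circ j$ with $\bar f:Y\to Z$ continuous. An $L$-order on $P$: $e:P\times P\to L$ reflexive ($e(x,x)=1$),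 transitive ($e(x,y)\wedge e(y,z)\le e(x,z)$), antisymmetric ($e(x,y)\wedge e(y,x)=1\Rightarrow x=y$). ${\downarrow}y(x)=e(x,y)$; $x=\sqcup A$ if $e(x,y)={\rm sub}_P(A,{\downarrow}y)$ for all $y$. Directed: nonempty and $D(x)\wedge D(y)\le\bigvee_zD(z)\wedge e(x,z)\wedge e(y,z)$; ideal = directed lower set. $L$-dcpo: all directed $L$-subsets have suprema. Scott continuous: preserves existing suprema of directed $L$-subsets ($f(\sqcup D)=\sqcup f^\rightarrow(D)$, the latter existing). ${\Downarrow}x(y)=\bigwedge\{e(x,\sqcup I)\to I(y):I\text{ ideal with a supremum}\}$; continuous $L$-ordered set: each ${\Downarrow}x$ directed with supremum $x$; continuous $L$-dcpo: continuous and an $L$-dcpo. Scott $L$-topology $\sigma_L(P)$: upper sets $A$ ($A(x)\wedge e(x,y)\le A(y)$) with $A(\sqcup D)=\bigvee_xA(x)\wedge D(x)$ for every directed $D$ having a supremum; $\Sigma_LP=(P,\sigma_L(P))$. A directed completion of a continuous $L$-ordered set $P$ is a continuous $L$-dcpo $Q$ with a Scott continuous $j:P\to Q$ such that each Scott continuous map from $P$ to a continuous $L$-dcpo $M$ factors uniquely as $\bar f\circ j$ with $\bar f:Q\to M$ Scott continuous. *)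

(* Defs.v *)
Set Implicit Arguments.

Record frame := Frame {
  fcar :> Type;
  fle : fcar -> fcar -> Prop;
  fle_refl : forall a, fle a a;
  fle_trans : forall a b c, fle a b -> fle b c -> fle a c;
  fle_antisym : forall a b, fle a b -> fle b a -> a = b;
  fjoin : (fcar -> Prop) -> fcar;
  fjoin_ub : forall S a, S a -> fle a (fjoin S);
  fjoin_least : forall S b, (forall a, S a -> fle a b) -> fle (fjoin S) b;
  fmeet : fcar -> fcar -> fcar;
  fmeet_l : forall a b, fle (fmeet a b) a;
  fmeet_r : forall a b, fle (fmeet a b) b;
  fmeet_glb : forall a b c, fle c a -> fle c b -> fle c (fmeet a b);
  fimp : fcar -> fcar -> fcar;
  fimp_adj : forall a b c, fle c (fimp a b) <-> fle (fmeet c a) b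
}.
(* A complete lattice whose binary meet has a right adjoint is exactly a
   frame equipped with its (Heyting) implication. *)

Arguments fle {f}.
Arguments fjoin {f}.
Arguments fmeet {f}.
Arguments fimp {f}.

Section FrameOps.
Variable L : frame.

Definition ftop : L := fjoin (fun _ : L => True).

Definition bigjoin (I : Type) (f : I -> L) : L :=
  fjoin (fun a => exists i, a = f i).
Definition bigmeet (I : Type) (f : I -> L) : L :=
  fjoin (fun a => forall i, fle a (f i)).
End FrameOps.

Arguments ftop {L}.
Arguments bigjoin {L I}.
Arguments bigmeet {L I}.

Section LSubsets.
Context {L : frame}.

Definition Lnonempty (X : Type) (A : X -> L) : Prop := bigjoin A = ftop.
Definition Lconst (X : Type) (a : L) : X -> L := fun _ => a.
Definition Lsub (X : Type) (A B : X -> L) : L :=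
  bigmeet (fun x => fimp (A x) (B x)).
Definition Limage (X Y : Type) (f : X -> Y) (A : X -> L) : Y -> L :=
  fun y => bigjoin (fun x : {x : X | f x = y} => A (proj1_sig x)).
Definition Lpreimage (X Y : Type) (f : X -> Y) (B : Y -> L) : X -> L :=
  fun x => B (f x).

Definition is_Ltop (X : Type) (O : (X -> L) -> Prop) : Prop :=
  (forall a : L, O (@Lconst X a)) /\
  (forall A B, O A -> O B -> O (fun x => fmeet (A x) (B x))) /\
  (forall S : (X -> L) -> Prop, (forall A, S A -> O A) ->
     O (fun x => bigjoin (fun A : {A | S A} => proj1_sig A x))).

Definition Lcontinuous (X Y : Type) (OX : (X -> L) -> Prop)
  (OY : (Y -> L) -> Prop) (f : X -> Y) : Prop :=
  forall B, OY B -> OX (Lpreimage f B).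

Definition T0 (X : Type) (O : (X -> L) -> Prop) : Prop :=
  forall x y, (forall A, O A -> A x = A y) -> x = y.

Definition spec (X : Type) (O : (X -> L) -> Prop) : X -> X -> L :=
  fun x y => bigmeet (fun A : {A | O A} => fimp (proj1_sig A x) (proj1_sig A y)).

(** points of O(X): maps O(X) -> L (represented as functions on all L-subsets,
    only their values on open sets matter) preserving binary meets and
    arbitrary joins of opens and sending the constant lambda_X to lambda. *)
Definition is_point (X : Type) (O : (X -> L) -> Prop) (p : (X -> L) -> L) : Prop :=
  (forall A B, O A -> O B -> p (fun x => fmeet (A x) (B x)) = fmeet (p A) (p B)) /\
  (forall S : (X -> L) -> Prop, (forall A, S A -> O A) ->
     p (fun x => bigjoin (fun A : {A | S A} => proj1_sig A x))
     = bigjoin (fun A : {A | S A} => p (proj1_sig A))) /\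
  (forall a : L, p (@Lconst X a) = a).

(** L-sober: x |-> [x] is a bijection onto the points
    (injective, and every point is some [x] on the open sets). *)
Definition Lsober (X : Type) (O : (X -> L) -> Prop) : Prop :=
  (forall x y, (forall A, O A -> A x = A y) -> x = y) /\
  (forall p, is_point O p -> exists x, forall A, O A -> p A = A x).

Definition is_Lsobrification (X Y : Type) (OX : (X -> L) -> Prop)
  (OY : (Y -> L) -> Prop) (j : X -> Y) : Prop :=
  is_Ltop OY /\ Lsober OY /\ Lcontinuous OX OY j /\
  forall (Z : Type) (OZ : (Z -> L) -> Prop), is_Ltop OZ -> Lsober OZ ->
  forall f : X -> Z, Lcontinuous OX OZ f ->
  exists fb : Y -> Z, Lcontinuous OY OZ fb /\ (forall x, fb (j x) = f x) /\
    (forall g : Y -> Z, Lcontinuous OY OZ g -> (forall x, g (j x) = f x) ->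
       forall y, g y = fb y).

Definition is_Lorder (P : Type) (e : P -> P -> L) : Prop :=
  (forall x, e x x = ftop) /\
  (forall x y z, fle (fmeet (e x y) (e y z)) (e x z)) /\
  (forall x y, fmeet (e x y) (e y x) = ftop -> x = y).

Definition Ldown (P : Type) (e : P -> P -> L) (y : P) : P -> L := fun x => e x y.

Definition is_sup (P : Type) (e : P -> P -> L) (A : P -> L) (x : P) : Prop :=
  forall y, e x y = Lsub A (Ldown e y).

Definition Ldirected (P : Type) (e : P -> P -> L) (D : P -> L) : Prop :=
  Lnonempty D /\
  forall x y, fle (fmeet (D x) (D y))
                  (bigjoin (fun z => fmeet (D z) (fmeet (e x z) (e y z)))).

Definition Lupper (P : Type) (e : P -> P -> L) (A : P -> L) : Prop :=
  forall x y, fle (fmeet (A x) (e x y)) (A y).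
Definition Llower (P : Type) (e : P -> P -> L) (A : P -> L) : Prop :=
  forall x y, fle (fmeet (A y) (e x y)) (A x).

Definition Lideal (P : Type) (e : P -> P -> L) (I : P -> L) : Prop :=
  Ldirected e I /\ Llower e I.

Definition Ldcpo (P : Type) (e : P -> P -> L) : Prop :=
  forall D, Ldirected e D -> exists x, is_sup e D x.

Definition Scott_continuous (P M : Type) (eP : P -> P -> L) (eM : M -> M -> L)
  (f : P -> M) : Prop :=
  forall D x, Ldirected eP D -> is_sup eP D x -> is_sup eM (Limage f D) (f x).

(** way-below: wayb x y = (Downarrow x)(y), the meet over all ideals I having
    a supremum s of  e(x, s) -> I(y). *)
Definition wayb (P : Type) (e : P -> P -> L) (x : P) : P -> L :=
  fun y => bigmeet (fun Is : {Is : (P -> L) * P | Lideal e (fst Is) /\ is_sup e (fst Is) (snd Is)} =>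
                      fimp (e x (snd (proj1_sig Is))) (fst (proj1_sig Is) y)).

Definition Lcontinuous_ordered (P : Type) (e : P -> P -> L) : Prop :=
  forall x, Ldirected e (wayb e x) /\ is_sup e (wayb e x) x.

Definition Lcontinuous_dcpo (P : Type) (e : P -> P -> L) : Prop :=
  Lcontinuous_ordered e /\ Ldcpo e.

Definition Scott_open (P : Type) (e : P -> P -> L) (A : P -> L) : Prop :=
  Lupper e A /\
  forall D s, Ldirected e D -> is_sup e D s ->
    A s = bigjoin (fun x => fmeet (A x) (D x)).

Definition is_directed_completion (P Q : Type) (eP : P -> P -> L)
  (eQ : Q -> Q -> L) (j : P -> Q) : Prop :=
  is_Lorder eQ /\ Lcontinuous_dcpo eQ /\ Scott_continuous eP eQ j /\
  forall (M : Type) (eM : M -> M -> L), is_Lorder eM -> Lcontinuous_dcpo eM ->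
  forall f : P -> M, Scott_continuous eP eM f ->
  exists fb : Q -> M, Scott_continuous eQ eM fb /\ (forall x, fb (j x) = f x) /\
    (forall g : Q -> M, Scott_continuous eQ eM g -> (forall x, g (j x) = f x) ->
       forall y, g y = fb y).
End LSubsets.

(* Main.v *)
Require Import Defs.
From Stdlib Require Import FunctionalExtensionality ProofIrrelevance ClassicalEpsilon.

Section Frame.
Context {L : frame}.
Local Notation "a ⊑ b" := (@fle L a b) (at level 70).
Local Notation "a ⊓ b" := (@fmeet L a b) (at level 40, left associativity).
Local Notation "a ⇒ b" := (@fimp L a b) (at level 55, right associativity).

Lemma le_refl (a : L) : a ⊑ a. Proof. apply fle_refl. Qed.
Lemma le_trans (a b c : L) : a ⊑ b -> b ⊑ c -> a ⊑ c. Proof. apply fle_trans. Qed.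
Lemma le_antisym (a b : L) : a ⊑ b -> b ⊑ a -> a = b. Proof. apply fle_antisym. Qed.
Lemma top_max (a : L) : a ⊑ ftop. Proof. unfold ftop. apply fjoin_ub. exact I. Qed.
Lemma mle_l (a b : L) : a ⊓ b ⊑ a. Proof. apply fmeet_l. Qed.
Lemma mle_r (a b : L) : a ⊓ b ⊑ b. Proof. apply fmeet_r. Qed.
Lemma mglb (a b c : L) : c ⊑ a -> c ⊑ b -> c ⊑ a ⊓ b. Proof. apply fmeet_glb. Qed.
Lemma bj_ub {I : Type} (f : I -> L) i : f i ⊑ bigjoin f.
Proof. unfold bigjoin. apply fjoin_ub. exists i. reflexivity. Qed.
Lemma bj_least {I : Type} (f : I -> L) b : (forall i, f i ⊑ b) -> bigjoin f ⊑ b.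
Proof. intro H. unfold bigjoin. apply fjoin_least. intros a [i ->]. auto. Qed.
Lemma bm_lb {I : Type} (f : I -> L) i : bigmeet f ⊑ f i.
Proof. unfold bigmeet. apply fjoin_least. intros a H. apply H. Qed.
Lemma bm_glb {I : Type} (f : I -> L) c : (forall i, c ⊑ f i) -> c ⊑ bigmeet f.
Proof. intro H. unfold bigmeet. apply fjoin_ub. exact H. Qed.
Lemma imp_intro (a b c : L) : c ⊓ a ⊑ b -> c ⊑ a ⇒ b.
Proof. apply fimp_adj. Qed.
Lemma imp_elim (a b c : L) : c ⊑ a ⇒ b -> c ⊓ a ⊑ b.
Proof. apply fimp_adj. Qed.
Lemma mp (a b : L) : (a ⇒ b) ⊓ a ⊑ b.
Proof. apply imp_elim, le_refl. Qed.
Lemma mcomm (a b : L) : a ⊓ b = b ⊓ a.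
Proof. apply le_antisym; apply mglb; first [apply mle_l | apply mle_r]. Qed.
Lemma mmono (a b c d : L) : a ⊑ c -> b ⊑ d -> a ⊓ b ⊑ c ⊓ d.
Proof. intros. apply mglb. eapply le_trans. apply mle_l. auto. eapply le_trans. apply mle_r. auto. Qed.
Lemma mtop (a : L) : a ⊓ ftop = a.
Proof. apply le_antisym. apply mle_l. apply mglb. apply le_refl. apply top_max. Qed.
Lemma le_top_eq (a : L) : ftop ⊑ a -> a = ftop.
Proof. intro. apply le_antisym; auto using top_max. Qed.
Lemma imp_top_l (b : L) : (ftop ⇒ b) ⊑ b.
Proof. eapply le_trans; [|apply mp]. apply mglb. apply le_refl. apply top_max. Qed.
Lemma imp_mono (a a' b b' : L) : a' ⊑ a -> b ⊑ b' -> (a ⇒ b) ⊑ (a' ⇒ b').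
Proof. intros. apply imp_intro. eapply le_trans; [|eassumption].
  eapply le_trans; [|apply mp]. apply mmono; auto using le_refl. Qed.
Lemma imp_of_le (a b c : L) : a ⊑ b -> c ⊑ a ⇒ b.
Proof. intros. apply imp_intro. eapply le_trans; [apply mle_r|]. auto. Qed.
Lemma distr (a : L) {I : Type} (f : I -> L) : a ⊓ bigjoin f ⊑ bigjoin (fun i => a ⊓ f i).
Proof.
  rewrite mcomm. apply imp_elim. apply bj_least. intro i. apply imp_intro.
  rewrite mcomm. apply (bj_ub (fun i => a ⊓ f i)).
Qed.
Lemma distr_r (a : L) {I : Type} (f : I -> L) : bigjoin f ⊓ a ⊑ bigjoin (fun i => f i ⊓ a).
Proof.
  rewrite mcomm. eapply le_trans. apply distr. apply bj_least. intro i.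
  rewrite mcomm. apply (bj_ub (fun i => f i ⊓ a)).
Qed.
Lemma bj_mono {I J : Type} (f : I -> L) (g : J -> L) :
  (forall i, exists j, f i ⊑ g j) -> bigjoin f ⊑ bigjoin g.
Proof. intro H. apply bj_least. intro i. destruct (H i) as [j Hj].
  eapply le_trans. eassumption. apply bj_ub. Qed.
Lemma bj_mono' {I : Type} (f g : I -> L) : (forall i, f i ⊑ g i) -> bigjoin f ⊑ bigjoin g.
Proof. intro H. apply bj_mono. intro i. exists i. auto. Qed.
Lemma bm_mono {I J : Type} (f : I -> L) (g : J -> L) :
  (forall j, exists i, f i ⊑ g j) -> bigmeet f ⊑ bigmeet g.
Proof. intro H. apply bm_glb. intro j. destruct (H j) as [i Hi].
  eapply le_trans. apply bm_lb. eassumption. Qed.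
Lemma le_bj {I : Type} (f : I -> L) a i : a ⊑ f i -> a ⊑ bigjoin f.
Proof. intros. eapply le_trans. eassumption. apply bj_ub. Qed.
Lemma bm_le {I : Type} (f : I -> L) a i : f i ⊑ a -> bigmeet f ⊑ a.
Proof. intros. eapply le_trans. apply bm_lb. eassumption. Qed.
Lemma bj_meet_l {I : Type} (f : I -> L) c R : (forall i, f i ⊓ c ⊑ R) -> bigjoin f ⊓ c ⊑ R.
Proof. intro H. eapply le_trans. apply distr_r. apply bj_least. exact H. Qed.
Lemma bj_meet_r {I : Type} (f : I -> L) c R : (forall i, c ⊓ f i ⊑ R) -> c ⊓ bigjoin f ⊑ R.
Proof. intro H. eapply le_trans. apply distr. apply bj_least. exact H. Qed.
Lemma meet_top_l (a : L) : ftop ⊓ a = a.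
Proof. rewrite mcomm. apply mtop. Qed.
Lemma imp_top_eq (a b : L) : a ⊑ b -> (a ⇒ b) = ftop.
Proof. intro. apply le_top_eq. apply imp_of_le. auto. Qed.
Lemma top_imp (a : L) : (ftop ⇒ a) = a.
Proof. apply le_antisym. apply imp_top_l. apply imp_intro. apply mle_l. Qed.
End Frame.

Ltac mproj := first [ apply le_refl | apply top_max
  | eapply le_trans; [apply mle_l|]; mproj
  | eapply le_trans; [apply mle_r|]; mproj ].
Ltac lat := repeat apply mglb; mproj.

Section Order.
Context {L : frame}.
Local Notation "a ⊑ b" := (@fle L a b) (at level 70).
Local Notation "a ⊓ b" := (@fmeet L a b) (at level 40, left associativity).
Local Notation "a ⇒ b" := (@fimp L a b) (at level 55, right associativity).

Lemma Lsub_intro {X : Type} (A B : X -> L) c : (forall x, c ⊓ A x ⊑ B x) -> c ⊑ Lsub A B.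
Proof. intro H. apply bm_glb. intro x. apply imp_intro. auto. Qed.
Lemma Lsub_elim {X : Type} (A B : X -> L) x : Lsub A B ⊓ A x ⊑ B x.
Proof. eapply le_trans; [|apply mp]. apply mmono. apply (bm_lb (fun x => A x ⇒ B x)). apply le_refl. Qed.
Lemma Lsub_elim' {X : Type} (A B : X -> L) x c : c ⊑ Lsub A B -> c ⊓ A x ⊑ B x.
Proof. intro. eapply le_trans; [|apply (Lsub_elim A B x)]. apply mmono; auto using le_refl. Qed.

Variable P : Type.
Variable e : P -> P -> L.
Hypothesis He : is_Lorder e.

Lemma e_refl x : e x x = ftop. Proof. apply He. Qed.
Lemma e_trans x y z : e x y ⊓ e y z ⊑ e x z. Proof. apply He. Qed.
Lemma e_trans' x y z c : c ⊑ e x y -> c ⊑ e y z -> c ⊑ e x z.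
Proof. intros. eapply le_trans; [|apply (e_trans x y z)]. apply mglb; auto. Qed.

Lemma sup_unique D s s' : is_sup e D s -> is_sup e D s' -> s = s'.
Proof.
  intros H1 H2. apply He.
  assert (A : e s s' = ftop) by (rewrite H1, <- H2; apply e_refl).
  assert (B : e s' s = ftop) by (rewrite H2, <- H1; apply e_refl).
  rewrite A, B. apply mtop.
Qed.

Lemma sup_below D s x : is_sup e D s -> D x ⊑ e x s.
Proof.
  intro H. assert (T : ftop ⊑ Lsub D (Ldown e s)) by (rewrite <- H, e_refl; apply le_refl).
  eapply le_trans; [|apply (Lsub_elim' _ _ x ftop T)]. apply mglb. apply top_max. apply le_refl.
Qed.

Lemma down_directed y : Ldirected e (Ldown e y).
Proof.
  split.
  - apply le_top_eq. eapply le_trans; [|apply (bj_ub _ y)]. unfold Ldown. rewrite e_refl. apply le_refl.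
  - intros a b. unfold Ldown. eapply le_trans; [|apply (bj_ub _ y)]. cbv beta.
    rewrite e_refl. lat.
Qed.
Lemma down_lower y : Llower e (Ldown e y).
Proof. intros a b. unfold Ldown. rewrite mcomm. apply e_trans. Qed.
Lemma down_sup y : is_sup e (Ldown e y) y.
Proof.
  intro w. apply le_antisym.
  - apply Lsub_intro. intro x. unfold Ldown. rewrite mcomm. apply e_trans.
  - eapply le_trans. apply (bm_lb _ y). unfold Ldown. rewrite e_refl. apply imp_top_l.
Qed.

Definition dclos (D : P -> L) : P -> L := fun y => bigjoin (fun x => D x ⊓ e y x).

Lemma dclos_ge D z : D z ⊑ dclos D z.
Proof. unfold dclos. apply (le_bj _ _ z). rewrite e_refl, mtop. apply le_refl. Qed.

Lemma dclos_ideal D : Ldirected e D -> Lideal e (dclos D).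
Proof.
  intros [Hn Hd]. split; [split|].
  - apply le_top_eq. rewrite <- Hn. apply bj_mono'. apply dclos_ge.
  - intros a b. unfold dclos at 1 2.
    apply bj_meet_l. intro x1. apply bj_meet_r. intro x2.
    apply le_trans with (bigjoin (fun z => D z ⊓ (e x1 z ⊓ e x2 z)) ⊓ (e a x1 ⊓ e b x2)).
    + apply mglb. eapply le_trans; [|apply Hd]. lat. lat.
    + apply bj_meet_l. intro z. apply (le_bj _ _ z). apply mglb.
      * eapply le_trans; [|apply dclos_ge]. lat.
      * apply mglb; eapply e_trans'; lat.
  - intros x y. unfold dclos. rewrite mcomm. apply bj_meet_r. intro z.
    apply (le_bj _ _ z). apply mglb. lat. eapply e_trans'; lat.
Qed.

Lemma dclos_sup D s : is_sup e D s -> is_sup e (dclos D) s.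
Proof.
  intros H w. rewrite H. apply le_antisym.
  - apply Lsub_intro. intro y. unfold dclos. apply bj_meet_r. intro x.
    unfold Ldown. eapply e_trans'. lat.
    eapply le_trans; [|exact (Lsub_elim D (Ldown e w) x)]. lat.
  - apply Lsub_intro. intro x. eapply le_trans; [|exact (Lsub_elim (dclos D) (Ldown e w) x)].
    apply mmono. apply le_refl. apply dclos_ge.
Qed.

End Order.
Arguments dclos {L P} e D _.

Section Maps.
Context {L : frame}.
Local Notation "a ⊑ b" := (@fle L a b) (at level 70).
Local Notation "a ⊓ b" := (@fmeet L a b) (at level 40, left associativity).
Local Notation "a ⇒ b" := (@fimp L a b) (at level 55, right associativity).

Lemma Limage_ge {X Y : Type} (f : X -> Y) (D : X -> L) x : D x ⊑ Limage f D (f x).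
Proof. unfold Limage. apply (le_bj _ _ (exist (fun x' => f x' = f x) x eq_refl)). apply le_refl. Qed.

Lemma Limage_elim {X Y : Type} (f : X -> Y) (D : X -> L) y c R :
  (forall x, f x = y -> D x ⊓ c ⊑ R) -> Limage f D y ⊓ c ⊑ R.
Proof. intro H. unfold Limage. apply bj_meet_l. intros [x Hx]. simpl. auto. Qed.

Lemma Lsub_Limage {X Y : Type} (f : X -> Y) (D : X -> L) (A : Y -> L) :
  Lsub (Limage f D) A = bigmeet (fun x => D x ⇒ A (f x)).
Proof.
  apply le_antisym.
  - apply bm_glb. intro x. apply imp_intro. eapply le_trans; [|exact (Lsub_elim (Limage f D) A (f x))].
    apply mmono. apply le_refl. apply Limage_ge.
  - apply Lsub_intro. intro y. rewrite mcomm. apply Limage_elim. intros x <-.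
    rewrite mcomm. eapply le_trans; [|apply mp]. apply mmono. apply (bm_lb (fun x => D x ⇒ A (f x))). apply le_refl.
Qed.

Lemma Limage_join {X Y : Type} (f : X -> Y) (D : X -> L) (B : Y -> L) :
  bigjoin (fun y => Limage f D y ⊓ B y) = bigjoin (fun x => D x ⊓ B (f x)).
Proof.
  apply le_antisym.
  - apply bj_least. intro y. apply Limage_elim. intros x <-. apply (bj_ub (fun x => D x ⊓ B (f x))).
  - apply bj_least. intro x. apply (le_bj _ _ (f x)). apply mmono. apply Limage_ge. apply le_refl.
Qed.

Lemma Limage_directed {X Y : Type} (eX : X -> X -> L) (eY : Y -> Y -> L) (f : X -> Y) D :
  (forall x y, eX x y ⊑ eY (f x) (f y)) -> Ldirected eX D -> Ldirected eY (Limage f D).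
Proof.
  intros Hm [Hn Hd]. split.
  - apply le_top_eq. rewrite <- Hn. apply bj_mono. intro x. exists (f x). apply Limage_ge.
  - intros a b. apply Limage_elim. intros x1 <-. rewrite mcomm. apply Limage_elim. intros x2 <-.
    eapply le_trans. rewrite mcomm. apply Hd. apply bj_least. intro z. apply (le_bj _ _ (f z)).
    apply mglb. eapply le_trans; [apply mle_l|]. apply Limage_ge.
    apply mglb. eapply le_trans; [|apply Hm]. lat. eapply le_trans; [|apply Hm]. lat.
Qed.

Lemma Scott_mono {X Y : Type} (eX : X -> X -> L) (eY : Y -> Y -> L) (f : X -> Y) :
  is_Lorder eX -> is_Lorder eY -> Scott_continuous eX eY f -> forall x y, eX x y ⊑ eY (f x) (f y).
Proof.
  intros HX HY Hf x y.
  pose proof (Hf _ _ (down_directed _ _ HX y) (down_sup _ _ HX y)) as Hs.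
  pose proof (sup_below _ _ HY _ _ (f x) Hs) as H1.
  eapply le_trans; [|exact H1]. apply (Limage_ge f (Ldown eX y) x).
Qed.

Lemma Scott_comp {X Y Z : Type} (eX : X -> X -> L) (eY : Y -> Y -> L) (eZ : Z -> Z -> L) f g :
  is_Lorder eX -> is_Lorder eY -> is_Lorder eZ ->
  Scott_continuous eX eY f -> Scott_continuous eY eZ g -> Scott_continuous eX eZ (fun x => g (f x)).
Proof.
  intros HX HY HZ Hf Hg D x Hd Hs.
  pose proof (Hg _ _ (Limage_directed _ _ _ _ (Scott_mono _ _ _ HX HY Hf) Hd) (Hf _ _ Hd Hs)) as H.
  intro m. rewrite H. rewrite (Lsub_Limage g). rewrite (Lsub_Limage (fun x => g (f x))).
  exact (Lsub_Limage f D (fun y => Ldown eZ m (g y))).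
Qed.

Lemma Scott_id {X : Type} (eX : X -> X -> L) : Scott_continuous eX eX (fun x => x).
Proof. intros D x _ Hs m. rewrite Hs, Lsub_Limage. reflexivity. Qed.

End Maps.

Lemma sup_Limage_comp {L : frame} {X Y Z : Type} (eZ : Z -> Z -> L) (h : X -> Y) (g : Y -> Z) (f : X -> Z) D s :
  is_sup eZ (Limage g (Limage h D)) s -> (forall x, g (h x) = f x) -> is_sup eZ (Limage f D) s.
Proof.
  intros H Hf m. rewrite H. rewrite (Lsub_Limage g). rewrite (Lsub_Limage f).
  transitivity (bigmeet (fun x => fimp (D x) (Ldown eZ m (g (h x))))).
  exact (Lsub_Limage h D (fun y => Ldown eZ m (g y))).
  f_equal. apply functional_extensionality. intro x. rewrite Hf. reflexivity.
Qed.

Section Wayb.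
Context {L : frame}.
Local Notation "a ⊑ b" := (@fle L a b) (at level 70).
Local Notation "a ⊓ b" := (@fmeet L a b) (at level 40, left associativity).
Local Notation "a ⇒ b" := (@fimp L a b) (at level 55, right associativity).
Variable P : Type.
Variable e : P -> P -> L.
Hypothesis He : is_Lorder e.

Lemma wayb_elim I s x y : Lideal e I -> is_sup e I s -> wayb e x y ⊓ e x s ⊑ I y.
Proof.
  intros HI Hs. eapply le_trans; [|apply mp]. apply mmono; [|apply le_refl].
  unfold wayb.
  exact (bm_lb (fun Is : {Is : (P -> L) * P | Lideal e (fst Is) /\ is_sup e (fst Is) (snd Is)} =>
                      fimp (e x (snd (proj1_sig Is))) (fst (proj1_sig Is) y))
     (exist _ (I, s) (conj HI Hs))).
Qed.

Lemma wayb_intro c x y : (forall I s, Lideal e I -> is_sup e I s -> c ⊓ e x s ⊑ I y) -> c ⊑ wayb e x y.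
Proof.
  intro H. unfold wayb. apply bm_glb. intros [[I s] [HI Hs]]. simpl. apply imp_intro. auto.
Qed.

Lemma wayb_ideal_le I x y : Lideal e I -> is_sup e I x -> wayb e x y ⊑ I y.
Proof. intros HI Hs. eapply le_trans; [|apply (wayb_elim I x x y HI Hs)]. rewrite (e_refl _ _ He), mtop. apply le_refl. Qed.

Lemma wayb_le x y : wayb e x y ⊑ e y x.
Proof. apply (wayb_ideal_le (Ldown e x)). split. apply down_directed; auto. apply down_lower; auto. apply down_sup; auto. Qed.

Lemma wayb_lower x y z : wayb e x y ⊓ e z y ⊑ wayb e x z.
Proof.
  apply wayb_intro. intros I s HI Hs. eapply le_trans; [|apply (proj2 HI z y)].
  apply mglb; [|lat]. eapply le_trans; [|apply (wayb_elim I s x y HI Hs)]. lat.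
Qed.

Lemma wayb_upper x y w : wayb e x y ⊓ e x w ⊑ wayb e w y.
Proof.
  apply wayb_intro. intros I s HI Hs. eapply le_trans; [|apply (wayb_elim I s x y HI Hs)].
  apply mglb. lat. eapply e_trans'; auto; lat.
Qed.

Lemma cont_criterion (W : P -> P -> L) :
  (forall q y, W q y ⊑ wayb e q y) -> (forall q, Ldirected e (W q)) -> (forall q, is_sup e (W q) q) ->
  Lcontinuous_ordered e.
Proof.
  intros HW Hd Hs q.
  assert (K : forall a, wayb e q a ⊑ dclos e (W q) a).
  { intro a. apply wayb_ideal_le. apply dclos_ideal; auto. apply dclos_sup; auto. }
  assert (K2 : forall z, dclos e (W q) z ⊑ wayb e q z).
  { intro z. unfold dclos. apply bj_least. intro x. eapply le_trans; [|apply (wayb_lower q x z)].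
    apply mmono. apply HW. apply le_refl. }
  split; [split|].
  - apply le_top_eq. rewrite <- (proj1 (Hd q)). apply bj_mono'. apply HW.
  - intros a b. eapply le_trans. apply mmono; apply K.
    eapply le_trans. apply (proj2 (proj1 (dclos_ideal _ _ He _ (Hd q)))).
    apply bj_mono'. intro z. apply mmono. apply K2. apply le_refl.
  - intro y. apply le_antisym.
    + apply Lsub_intro. intro z. unfold Ldown. rewrite mcomm. eapply e_trans'; auto.
      eapply le_trans; [apply mle_l|]. apply wayb_le. lat.
    + rewrite (Hs q y). apply Lsub_intro. intro x.
      eapply le_trans; [|exact (Lsub_elim (wayb e q) (Ldown e y) x)].
      apply mmono. apply le_refl. apply HW.
Qed.

Hypothesis Hc : Lcontinuous_ordered e.

Definition interp_ideal x : P -> L := fun y => bigjoin (fun z => wayb e x z ⊓ wayb e z y).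

Lemma interp_ideal_ideal x : Lideal e (interp_ideal x).
Proof.
  split; [split|].
  - apply le_top_eq. rewrite <- (proj1 (proj1 (Hc x))). apply bj_least. intro z.
    rewrite <- (mtop (wayb e x z)). rewrite <- (proj1 (proj1 (Hc z))).
    apply bj_meet_r. intro y. apply (le_bj _ _ y). unfold interp_ideal. apply (le_bj _ _ z). apply le_refl.
  - intros a b. unfold interp_ideal at 1 2. apply bj_meet_l. intro z1. apply bj_meet_r. intro z2.
    apply le_trans with (bigjoin (fun w => wayb e x w ⊓ (e z1 w ⊓ e z2 w)) ⊓ (wayb e z1 a ⊓ wayb e z2 b)).
    { apply mglb. eapply le_trans; [|apply (proj2 (proj1 (Hc x)))]. lat. lat. }
    apply bj_meet_l. intro w.
    apply le_trans with (wayb e x w ⊓ (wayb e w a ⊓ wayb e w b)).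
    { apply mglb. lat. apply mglb.
      eapply le_trans; [|apply (wayb_upper z1 a w)]. lat.
      eapply le_trans; [|apply (wayb_upper z2 b w)]. lat. }
    eapply le_trans. apply mmono. apply le_refl. apply (proj2 (proj1 (Hc w))).
    apply bj_meet_r. intro v. apply (le_bj _ _ v). apply mglb; [|lat].
    unfold interp_ideal. apply (le_bj _ _ w). lat.
  - intros a y. unfold interp_ideal. apply bj_meet_l. intro z. apply (le_bj _ _ z).
    apply mglb. lat. eapply le_trans; [|apply (wayb_lower z y a)]. lat.
Qed.

Lemma interp_ideal_sup x : is_sup e (interp_ideal x) x.
Proof.
  intro w. rewrite (proj2 (Hc x) w). apply le_antisym.
  - apply Lsub_intro. intro y. unfold interp_ideal. apply bj_meet_r. intro z. unfold Ldown.
    eapply e_trans'; auto.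
    + eapply le_trans; [apply mle_r|]. eapply le_trans; [apply mle_r|]. apply wayb_le.
    + eapply le_trans; [|exact (Lsub_elim (wayb e x) (Ldown e w) z)]. lat.
  - apply Lsub_intro. intro z. unfold Ldown. rewrite (proj2 (Hc z) w). apply Lsub_intro. intro y.
    eapply le_trans; [|exact (Lsub_elim (interp_ideal x) (Ldown e w) y)]. apply mglb. lat.
    unfold interp_ideal. apply (le_bj _ _ z). lat.
Qed.

Lemma interpolation x y : wayb e x y ⊑ bigjoin (fun z => wayb e x z ⊓ wayb e z y).
Proof. apply (wayb_ideal_le (interp_ideal x)). apply interp_ideal_ideal. apply interp_ideal_sup. Qed.

Lemma up_open u : Scott_open e (fun z => wayb e z u).
Proof.
  split.
  - intros x y. apply wayb_upper.
  - intros D s Hd Hs. apply le_antisym.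
    + eapply le_trans. apply interpolation. apply bj_least. intro z.
      eapply le_trans. apply mmono. apply (wayb_ideal_le (dclos e D)). apply dclos_ideal; auto.
      apply dclos_sup; auto. apply le_refl.
      unfold dclos. apply bj_meet_l. intro x. apply (le_bj _ _ x). apply mglb; [|lat].
      eapply le_trans; [|apply (wayb_upper z u x)]. lat.
    + apply bj_least. intro x. eapply le_trans; [|apply (wayb_upper x u s)]. apply mmono.
      apply le_refl. apply (sup_below _ _ He _ _ _ Hs).
Qed.

Lemma open_approx A z : Scott_open e A -> A z = bigjoin (fun u => A u ⊓ wayb e z u).
Proof. intro HA. apply (proj2 HA). apply Hc. apply Hc. Qed.

End Wayb.

Section Top.
Context {L : frame}.
Local Notation "a ⊑ b" := (@fle L a b) (at level 70).
Local Notation "a ⊓ b" := (@fmeet L a b) (at level 40, left associativity).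
Local Notation "a ⇒ b" := (@fimp L a b) (at level 55, right associativity).
Context {X : Type} (O : (X -> L) -> Prop).

Lemma join_fam_eq {I : Type} (F : I -> X -> L) :
  (fun x => bigjoin (fun A : {A | exists i, A = F i} => proj1_sig A x)) = (fun x => bigjoin (fun i => F i x)).
Proof.
  apply functional_extensionality. intro x. apply le_antisym.
  - apply bj_mono. intros [A [i ->]]. exists i. apply le_refl.
  - apply bj_mono. intro i. exists (exist (fun A => exists i, A = F i) (F i) (ex_intro _ i eq_refl)). apply le_refl.
Qed.

Hypothesis HO : is_Ltop O.

Lemma top_join_fam {I : Type} (F : I -> X -> L) : (forall i, O (F i)) -> O (fun x => bigjoin (fun i => F i x)).
Proof.
  intro H. rewrite <- join_fam_eq. apply (proj2 (proj2 HO)). intros A [i ->]. auto.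
Qed.

Lemma top_meet_const A c : O A -> O (fun x => A x ⊓ c).
Proof. intro H. exact (proj1 (proj2 HO) A (Lconst c) H (proj1 HO c)). Qed.

Variable p : (X -> L) -> L.
Hypothesis Hp : is_point O p.

Lemma point_join_fam {I : Type} (F : I -> X -> L) : (forall i, O (F i)) ->
  p (fun x => bigjoin (fun i => F i x)) = bigjoin (fun i => p (F i)).
Proof using HO Hp.
  intro H. rewrite <- join_fam_eq. rewrite (proj1 (proj2 Hp)).
  - apply le_antisym.
    + apply bj_mono. intros [A [i ->]]. exists i. apply le_refl.
    + apply bj_mono. intro i. exists (exist (fun A => exists i, A = F i) (F i) (ex_intro _ i eq_refl)). apply le_refl.
  - intros A [i ->]. auto.
Qed.

Lemma point_meet_const A c : O A -> p (fun x => A x ⊓ c) = p A ⊓ c.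
Proof using HO Hp.
  intro H. transitivity (p A ⊓ p (Lconst c)). exact (proj1 Hp A (Lconst c) H (proj1 HO c)).
  rewrite (proj2 (proj2 Hp) c). reflexivity.
Qed.

Lemma point_mono A B : O A -> O B -> (forall x, A x ⊑ B x) -> p A ⊑ p B.
Proof using HO Hp.
  intros HA HB H. assert (E : (fun x => A x ⊓ B x) = A).
  { apply functional_extensionality. intro x. apply le_antisym. apply mle_l. apply mglb. apply le_refl. auto. }
  rewrite <- E at 1. rewrite (proj1 Hp A B HA HB). apply mle_r.
Qed.
End Top.

Section Scott.
Context {L : frame}.
Local Notation "a ⊑ b" := (@fle L a b) (at level 70).
Local Notation "a ⊓ b" := (@fmeet L a b) (at level 40, left associativity).
Local Notation "a ⇒ b" := (@fimp L a b) (at level 55, right associativity).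
Variable P : Type.
Variable e : P -> P -> L.
Hypothesis He : is_Lorder e.

Lemma Scott_open_of A : Lupper e A ->
  (forall D s, Ldirected e D -> is_sup e D s -> A s ⊑ bigjoin (fun x => A x ⊓ D x)) -> Scott_open e A.
Proof.
  intros Hu H. split. auto. intros D s Hd Hs. apply le_antisym. auto.
  apply bj_least. intro x. eapply le_trans; [|apply (Hu x s)]. apply mmono. apply le_refl.
  apply (sup_below _ _ He _ _ _ Hs).
Qed.

Lemma Scott_top : is_Ltop (Scott_open e).
Proof.
  split; [|split].
  - intro a. apply Scott_open_of.
    + intros x y. apply mle_l.
    + intros D s [Hn _] _. unfold Lconst. rewrite <- (mtop a) at 1. rewrite <- Hn. apply distr.
  - intros A B HA HB. apply Scott_open_of.
    + intros x y. apply mglb.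
      * eapply le_trans; [|apply (proj1 HA x y)]. lat.
      * eapply le_trans; [|apply (proj1 HB x y)]. lat.
    + intros D s Hd Hs. rewrite (proj2 HA D s Hd Hs), (proj2 HB D s Hd Hs).
      apply bj_meet_l. intro x. apply bj_meet_r. intro y.
      apply le_trans with (bigjoin (fun z => D z ⊓ (e x z ⊓ e y z)) ⊓ (A x ⊓ B y)).
      { apply mglb. eapply le_trans; [|apply (proj2 Hd)]. lat. lat. }
      apply bj_meet_l. intro z. apply (le_bj _ _ z). apply mglb. apply mglb.
      * eapply le_trans; [|apply (proj1 HA x z)]. lat.
      * eapply le_trans; [|apply (proj1 HB y z)]. lat.
      * lat.
  - intros S HS. apply Scott_open_of.
    + intros x y. apply bj_meet_l. intros [A HA]. simpl. apply (le_bj _ _ (exist _ A HA)). simpl.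
      apply (proj1 (HS A HA)).
    + intros D s Hd Hs. apply bj_least. intros [A HA]. simpl. rewrite (proj2 (HS A HA) D s Hd Hs).
      apply bj_least. intro x. apply (le_bj _ _ x). apply mmono; [|apply le_refl].
      apply (le_bj _ _ (exist _ A HA)). apply le_refl.
Qed.

Lemma Scott_upper A : Scott_open e A -> forall x y, A x ⊓ e x y ⊑ A y.
Proof. intros H. apply H. Qed.

Lemma Scott_to_cont {Y : Type} (eY : Y -> Y -> L) (f : P -> Y) :
  is_Lorder eY -> Scott_continuous e eY f -> Lcontinuous (Scott_open e) (Scott_open eY) f.
Proof.
  intros HY Hf B HB. unfold Lpreimage. split.
  - intros x y. eapply le_trans; [|apply (proj1 HB (f x) (f y))]. apply mmono. apply le_refl.
    apply (Scott_mono _ _ _ He HY Hf).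
  - intros D s Hd Hs.
    rewrite (proj2 HB (Limage f D) (f s) (Limage_directed _ _ _ _ (Scott_mono _ _ _ He HY Hf) Hd) (Hf _ _ Hd Hs)).
    replace (fun x => B x ⊓ Limage f D x) with (fun x => Limage f D x ⊓ B x)
      by (apply functional_extensionality; intro; apply mcomm).
    rewrite Limage_join. f_equal. apply functional_extensionality. intro; apply mcomm.
Qed.

Section Cont.
Hypothesis Hc : Lcontinuous_ordered e.

Lemma spec_Scott x y : spec (Scott_open e) x y = e x y.
Proof.
  apply le_antisym.
  - rewrite (proj2 (Hc x) y). apply Lsub_intro. intro u.
    eapply le_trans; [|apply (wayb_le _ _ He y u)].
    eapply le_trans; [|apply mp]. apply mmono; [|apply le_refl]. unfold spec.
    exact (bm_lb (fun A : {A | Scott_open e A} => fimp (proj1_sig A x) (proj1_sig A y))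
                 (exist _ (fun z => wayb e z u) (up_open _ _ He Hc u))).
  - unfold spec. apply bm_glb. intros [A HA]. simpl. apply imp_intro. rewrite mcomm. apply (proj1 HA).
Qed.

Lemma spec_Scott_eq : spec (Scott_open e) = e.
Proof. apply functional_extensionality. intro x. apply functional_extensionality. intro y. apply spec_Scott. Qed.

Hypothesis Hd : Ldcpo e.

Lemma Scott_sober : Lsober (Scott_open e).
Proof.
  split.
  - intros x y H. assert (E : wayb e x = wayb e y).
    { apply functional_extensionality. intro u. exact (H _ (up_open _ _ He Hc u)). }
    apply (sup_unique _ _ He (wayb e x)). apply Hc. rewrite E. apply Hc.
  - intros p Hp. pose proof (Scott_top) as HT.
    set (D := fun u => p (fun z => wayb e z u)).
    assert (Hup : forall u, Scott_open e (fun z => wayb e z u)) by (intro; apply up_open; auto).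
    assert (DD : Ldirected e D).
    { split.
      - unfold Lnonempty, D. rewrite <- (point_join_fam _ HT p Hp (fun u z => wayb e z u) Hup).
        replace (fun x => bigjoin (fun u => wayb e x u)) with (@Lconst L P ftop).
        apply (proj2 (proj2 Hp)). apply functional_extensionality. intro x. unfold Lconst.
        symmetry. apply (proj1 (proj1 (Hc x))).
      - intros a b. unfold D. rewrite <- (proj1 Hp _ _ (Hup a) (Hup b)).
        assert (Ho : forall w, Scott_open e (fun z => wayb e z w ⊓ (e a w ⊓ e b w))).
        { intro w. apply (top_meet_const _ HT). auto. }
        eapply le_trans. apply (point_mono _ HT p Hp _ (fun z => bigjoin (fun w => wayb e z w ⊓ (e a w ⊓ e b w)))).
        apply (proj1 (proj2 HT)); auto. apply (top_join_fam _ HT). auto.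
        intro z. apply (proj2 (proj1 (Hc z))).
        rewrite (point_join_fam _ HT p Hp _ Ho). apply bj_mono'. intro w.
        rewrite (point_meet_const _ HT p Hp _ _ (Hup w)). apply le_refl. }
    destruct (Hd D DD) as [s Hs]. exists s. intros A HA.
    rewrite (proj2 HA D s DD Hs). unfold D.
    assert (Ho : forall u, Scott_open e (fun z => wayb e z u ⊓ A u)).
    { intro u. apply (top_meet_const _ HT). auto. }
    transitivity (bigjoin (fun u => p (fun z => wayb e z u ⊓ A u))).
    + rewrite <- (point_join_fam _ HT p Hp _ Ho). f_equal. apply functional_extensionality. intro z.
      rewrite (open_approx _ _ Hc A z HA) at 1. f_equal. apply functional_extensionality. intro u. apply mcomm.
    + f_equal. apply functional_extensionality. intro u. rewrite (point_meet_const _ HT p Hp _ _ (Hup u)). apply mcomm.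
Qed.
End Cont.
End Scott.

Section Model.
Context {L : frame}.
Local Notation "a ⊑ b" := (@fle L a b) (at level 70).
Local Notation "a ⊓ b" := (@fmeet L a b) (at level 40, left associativity).
Local Notation "a ⇒ b" := (@fimp L a b) (at level 55, right associativity).
Variable P : Type.
Variable e : P -> P -> L.
Hypothesis He : is_Lorder e.
Hypothesis Hc : Lcontinuous_ordered e.

Definition RI (I : P -> L) : Prop :=
  Ldirected e I /\ Llower e I /\ (forall x, I x ⊑ bigjoin (fun y => I y ⊓ wayb e y x)).

Definition Q0 := {I : P -> L | RI I}.
Definition e0 (I J : Q0) : L := Lsub (proj1_sig I) (proj1_sig J).

Lemma j0_RI x : RI (wayb e x).
Proof.
  split; [|split]. apply Hc. intros a y. apply wayb_lower; auto. intro y. apply interpolation; auto.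
Qed.
Definition j0 (x : P) : Q0 := exist _ (wayb e x) (j0_RI x).

Lemma Q0_eq (I J : Q0) : proj1_sig I = proj1_sig J -> I = J.
Proof. destruct I as [I HI], J as [J HJ]. simpl. intros ->. f_equal. apply proof_irrelevance. Qed.

Lemma RI_dir (I : Q0) : Ldirected e (proj1_sig I). Proof. apply (proj2_sig I). Qed.
Lemma RI_lower (I : Q0) x y : proj1_sig I y ⊓ e x y ⊑ proj1_sig I x. Proof. apply (proj2_sig I). Qed.
Lemma RI_round (I : Q0) x : proj1_sig I x ⊑ bigjoin (fun y => proj1_sig I y ⊓ wayb e y x).
Proof. apply (proj2_sig I). Qed.

Lemma e0_order : is_Lorder e0.
Proof.
  split; [|split].
  - intro I. apply le_top_eq. apply Lsub_intro. intro x. apply mle_r.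
  - intros I J K. apply Lsub_intro. intro x.
    eapply le_trans; [|exact (Lsub_elim (proj1_sig J) (proj1_sig K) x)]. apply mglb. lat.
    eapply le_trans; [|exact (Lsub_elim (proj1_sig I) (proj1_sig J) x)]. lat.
  - intros I J H. apply Q0_eq. apply functional_extensionality. intro x. apply le_antisym.
    + eapply le_trans; [|exact (Lsub_elim (proj1_sig I) (proj1_sig J) x)]. apply mglb; [|apply le_refl].
      eapply le_trans; [apply top_max|]. rewrite <- H. apply mle_l.
    + eapply le_trans; [|exact (Lsub_elim (proj1_sig J) (proj1_sig I) x)]. apply mglb; [|apply le_refl].
      eapply le_trans; [apply top_max|]. rewrite <- H. apply mle_r.
Qed.

Lemma e0_refl I : e0 I I = ftop. Proof. apply e0_order. Qed.

Lemma lower_j0 (I : Q0) x : proj1_sig I x ⊑ e0 (j0 x) I.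
Proof.
  apply Lsub_intro. intro y. simpl. eapply le_trans; [|apply (RI_lower I y x)].
  apply mmono. apply le_refl. apply wayb_le; auto.
Qed.

Lemma j0_mono x y : e x y ⊑ e0 (j0 x) (j0 y).
Proof. apply Lsub_intro. intro z. simpl. rewrite mcomm. apply wayb_upper; auto. Qed.

Lemma e0_j0_approx (I K : Q0) : e0 I K = bigmeet (fun x => proj1_sig I x ⇒ e0 (j0 x) K).
Proof.
  apply le_antisym.
  - apply bm_glb. intro x. apply imp_intro. apply (e_trans' _ _ e0_order _ I). 
    eapply le_trans; [apply mle_r|]. apply lower_j0. lat.
  - apply Lsub_intro. intro y. eapply le_trans. apply mmono. apply le_refl. apply RI_round.
    apply bj_meet_r. intro x.
    eapply le_trans; [|exact (Lsub_elim (wayb e x) (proj1_sig K) y)]. apply mglb; [|lat].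
    eapply le_trans; [|apply mp]. apply mmono. 
    + apply (bm_lb (fun x => proj1_sig I x ⇒ e0 (j0 x) K)).
    + lat.
Qed.

Definition U (D : Q0 -> L) : P -> L := fun x => bigjoin (fun I : Q0 => D I ⊓ proj1_sig I x).

Lemma U_RI D : Ldirected e0 D -> RI (U D).
Proof.
  intros [Hn Hd]. split; [split|split].
  - apply le_top_eq. rewrite <- Hn. apply bj_least. intro I.
    rewrite <- (mtop (D I)). rewrite <- (proj1 (RI_dir I)). apply bj_meet_r. intro x.
    apply (le_bj _ _ x). apply (le_bj _ _ I). apply le_refl.
  - intros a b. unfold U at 1 2. apply bj_meet_l. intro I1. apply bj_meet_r. intro I2.
    apply le_trans with (bigjoin (fun K => D K ⊓ (e0 I1 K ⊓ e0 I2 K)) ⊓ (proj1_sig I1 a ⊓ proj1_sig I2 b)).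
    { apply mglb. eapply le_trans; [|apply Hd]. lat. lat. }
    apply bj_meet_l. intro K.
    apply le_trans with (D K ⊓ (proj1_sig K a ⊓ proj1_sig K b)).
    { apply mglb. lat. apply mglb.
      - eapply le_trans; [|exact (Lsub_elim (proj1_sig I1) (proj1_sig K) a)]. lat.
      - eapply le_trans; [|exact (Lsub_elim (proj1_sig I2) (proj1_sig K) b)]. lat. }
    eapply le_trans. apply mmono. apply le_refl. apply (proj2 (RI_dir K)).
    apply bj_meet_r. intro z. apply (le_bj _ _ z). apply mglb; [|lat].
    unfold U. apply (le_bj _ _ K). lat.
  - intros x y. unfold U. apply bj_meet_l. intro I. apply (le_bj _ _ I). apply mglb. lat.
    eapply le_trans; [|apply (RI_lower I x y)]. lat.
  - intro x. unfold U at 1. apply bj_least. intro I.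
    eapply le_trans. apply mmono. apply le_refl. apply RI_round.
    apply bj_meet_r. intro y. apply (le_bj _ _ y). apply mglb; [|lat].
    unfold U. apply (le_bj _ _ I). lat.
Qed.

Definition Usup D (H : Ldirected e0 D) : Q0 := exist _ (U D) (U_RI D H).

Lemma Usup_sup D H : is_sup e0 D (Usup D H).
Proof.
  intro K. unfold e0 at 1. simpl. apply le_antisym.
  - apply Lsub_intro. intro I. apply Lsub_intro. intro x.
    eapply le_trans; [|exact (Lsub_elim (U D) (proj1_sig K) x)]. apply mglb. lat.
    unfold U. apply (le_bj _ _ I). lat.
  - apply Lsub_intro. intro x. unfold U. apply bj_meet_r. intro I.
    eapply le_trans; [|exact (Lsub_elim (proj1_sig I) (proj1_sig K) x)]. apply mglb; [|lat].
    eapply le_trans; [|exact (Lsub_elim D (Ldown e0 K) I)]. lat.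
Qed.

Lemma Q0_dcpo : Ldcpo e0.
Proof. intros D H. exists (Usup D H). apply Usup_sup. Qed.

Lemma sup_val D S : Ldirected e0 D -> is_sup e0 D S -> proj1_sig S = U D.
Proof.
  intros H Hs. rewrite (sup_unique _ _ e0_order D S (Usup D H) Hs (Usup_sup D H)). reflexivity.
Qed.

Definition W0 (I J : Q0) : L := bigjoin (fun x => proj1_sig I x ⊓ e0 J (j0 x)).

Lemma W0_le I J : W0 I J ⊑ wayb e0 I J.
Proof.
  apply wayb_intro. intros II S HI HS. unfold W0. apply bj_meet_l. intro x.
  assert (E : proj1_sig S = U II) by (apply sup_val; apply HI || auto).
  assert (H1 : proj1_sig I x ⊓ e0 I S ⊑ U II x).
  { rewrite <- E. rewrite mcomm. exact (Lsub_elim (proj1_sig I) (proj1_sig S) x). }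
  apply le_trans with (U II x ⊓ e0 J (j0 x)).
  { apply mglb. eapply le_trans; [|exact H1]. lat. lat. }
  unfold U. apply bj_meet_l. intro K. eapply le_trans; [|apply (proj2 HI J K)].
  apply mglb. lat. apply (e_trans' _ _ e0_order _ (j0 x)). lat.
  eapply le_trans; [|apply lower_j0]. lat.
Qed.

Lemma W0_dir I : Ldirected e0 (W0 I).
Proof.
  split.
  - apply le_top_eq. rewrite <- (proj1 (RI_dir I)). apply bj_least. intro x.
    apply (le_bj _ _ (j0 x)). unfold W0. apply (le_bj _ _ x). rewrite e0_refl, mtop. apply le_refl.
  - intros J1 J2. unfold W0 at 1 2. apply bj_meet_l. intro x1. apply bj_meet_r. intro x2.
    apply le_trans with (bigjoin (fun z => proj1_sig I z ⊓ (e x1 z ⊓ e x2 z)) ⊓ (e0 J1 (j0 x1) ⊓ e0 J2 (j0 x2))).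
    { apply mglb. eapply le_trans; [|apply (proj2 (RI_dir I))]. lat. lat. }
    apply bj_meet_l. intro z. apply (le_bj _ _ (j0 z)). apply mglb; [|apply mglb].
    + unfold W0. apply (le_bj _ _ z). rewrite e0_refl, mtop. lat.
    + apply (e_trans' _ _ e0_order _ (j0 x1)). lat. eapply le_trans; [|apply j0_mono]. lat.
    + apply (e_trans' _ _ e0_order _ (j0 x2)). lat. eapply le_trans; [|apply j0_mono]. lat.
Qed.

Lemma W0_sup I : is_sup e0 (W0 I) I.
Proof.
  intro K. apply le_antisym.
  - apply Lsub_intro. intro J. unfold W0. apply bj_meet_r. intro x.
    apply (e_trans' _ _ e0_order _ (j0 x)). lat. apply (e_trans' _ _ e0_order _ I).
    eapply le_trans; [|apply lower_j0]. lat. lat.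
  - rewrite e0_j0_approx. apply bm_glb. intro x. apply imp_intro.
    eapply le_trans; [|exact (Lsub_elim (W0 I) (Ldown e0 K) (j0 x))]. apply mglb. lat.
    unfold W0. apply (le_bj _ _ x). rewrite e0_refl, mtop. lat.
Qed.

Lemma Q0_cont : Lcontinuous_ordered e0.
Proof. apply (cont_criterion _ _ e0_order W0). apply W0_le. apply W0_dir. apply W0_sup. Qed.

Lemma j0_Scott : Scott_continuous e e0 j0.
Proof.
  intros D s Hd Hs K. rewrite Lsub_Limage. unfold e0 at 1. simpl. apply le_antisym.
  - apply bm_glb. intro x. apply imp_intro. apply Lsub_intro. intro y. simpl.
    eapply le_trans; [|exact (Lsub_elim (wayb e s) (proj1_sig K) y)]. apply mglb. lat.
    eapply le_trans; [|apply (wayb_upper _ _ He x y s)]. apply mglb. lat.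
    eapply le_trans; [|apply (sup_below _ _ He _ _ _ Hs)]. lat.
  - apply Lsub_intro. intro y. rewrite (proj2 (up_open _ _ He Hc y) D s Hd Hs).
    apply bj_meet_r. intro x.
    eapply le_trans; [|exact (Lsub_elim (wayb e x) (proj1_sig K) y)]. apply mglb; [|lat].
    eapply le_trans; [|apply mp]. apply mmono.
    + apply (bm_lb (fun x => D x ⇒ Ldown e0 K (j0 x))).
    + lat.
Qed.

Lemma Limage_j0_dir (I : Q0) : Ldirected e0 (Limage j0 (proj1_sig I)).
Proof. apply (Limage_directed e e0). apply j0_mono. apply RI_dir. Qed.

Lemma Limage_j0_sup (I : Q0) : is_sup e0 (Limage j0 (proj1_sig I)) I.
Proof. intro K. rewrite Lsub_Limage. apply e0_j0_approx. Qed.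

End Model.

Section Model2.
Context {L : frame}.
Local Notation "a ⊑ b" := (@fle L a b) (at level 70).
Local Notation "a ⊓ b" := (@fmeet L a b) (at level 40, left associativity).
Local Notation "a ⇒ b" := (@fimp L a b) (at level 55, right associativity).
Variable P : Type.
Variable e : P -> P -> L.
Hypothesis He : is_Lorder e.
Hypothesis Hc : Lcontinuous_ordered e.

Local Notation Q0 := (Q0 P e).
Local Notation e0 := (e0 P e).
Local Notation j0 := (j0 P e He Hc).

Lemma Q0_DC : is_directed_completion e e0 j0.
Proof.
  split; [|split; [|split]].
  - apply e0_order.
  - split. apply Q0_cont; auto. apply Q0_dcpo.
  - apply j0_Scott; auto.
  - intros M eM HM HMc f Hf.
    assert (Hdir : forall I : Q0, Ldirected eM (Limage f (proj1_sig I))).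
    { intro I. apply (Limage_directed e eM). apply (Scott_mono _ _ _ He HM Hf). apply RI_dir. }
    pose (fb := fun I => proj1_sig (constructive_indefinite_description _ (proj2 HMc _ (Hdir I)))).
    exists fb.
    assert (Hfb : forall I, is_sup eM (Limage f (proj1_sig I)) (fb I)).
    { intro I. unfold fb. destruct (constructive_indefinite_description _ _). simpl. auto. }
    assert (key : forall I x m, eM (fb I) m ⊓ proj1_sig I x ⊑ eM (f x) m).
    { intros I x m. rewrite (Hfb I m), Lsub_Limage. eapply le_trans; [|apply mp]. apply mmono.
      apply (bm_lb (fun x => proj1_sig I x ⇒ Ldown eM m (f x))). apply le_refl. }
    split; [|split].
    + intros D S Hd Hs m. rewrite (Hfb S m), !Lsub_Limage. rewrite (sup_val _ _ D S Hd Hs).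
      apply le_antisym.
      * apply bm_glb. intro I. apply imp_intro. unfold Ldown at 2. rewrite (Hfb I m), Lsub_Limage. apply bm_glb. intro x.
        apply imp_intro. eapply le_trans; [|apply mp]. apply mglb.
        eapply le_trans; [apply mle_l|]. eapply le_trans; [apply mle_l|].
        apply (bm_lb (fun x => U P e D x ⇒ Ldown eM m (f x))). unfold U. apply (le_bj _ _ I). lat.
      * apply bm_glb. intro x. apply imp_intro. unfold U. apply bj_meet_r. intro I.
        eapply le_trans; [|apply (key I x m)]. apply mglb; [|lat].
        eapply le_trans; [|apply mp]. apply mmono.
        apply (bm_lb (fun I => D I ⇒ Ldown eM m (fb I))). lat.
    + intro x. apply (sup_unique _ _ HM (Limage f (wayb e x))). apply (Hfb (j0 x)).
      apply Hf; apply Hc.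
    + intros g Hg Hgj I. apply (sup_unique _ _ HM (Limage f (proj1_sig I))); [|apply Hfb].
      apply (sup_Limage_comp eM j0 g f). apply Hg. apply Limage_j0_dir. apply Limage_j0_sup. auto.
Qed.

Lemma hat_open (A : P -> L) : Scott_open e0 (fun I => bigjoin (fun x => proj1_sig I x ⊓ A x)).
Proof.
  apply Scott_open_of. apply e0_order.
  - intros I J. apply bj_meet_l. intro x. apply (le_bj _ _ x). apply mglb; [|lat].
    eapply le_trans; [|exact (Lsub_elim (proj1_sig I) (proj1_sig J) x)]. lat.
  - intros D S Hd Hs. rewrite (sup_val _ _ D S Hd Hs). apply bj_least. intro x.
    unfold U. apply bj_meet_l. intro I. apply (le_bj _ _ I). apply mglb; [|lat].
    apply (le_bj _ _ x). lat.
Qed.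

Lemma Q0_sob : is_Lsobrification (Scott_open e) (Scott_open e0) j0.
Proof.
  split; [|split; [|split]].
  - apply Scott_top. apply e0_order.
  - apply Scott_sober. apply e0_order. apply Q0_cont; auto. apply Q0_dcpo.
  - apply Scott_to_cont; auto. apply e0_order. apply j0_Scott; auto.
  - intros Z OZ HZt HZs f Hf.
    set (Ppt := fun (I : Q0) (C : Z -> L) => bigjoin (fun x => proj1_sig I x ⊓ C (f x))).
    assert (Hpt : forall I, is_point OZ (Ppt I)).
    { intro I. split; [|split].
      - intros C C' HC HC'. unfold Ppt. apply le_antisym.
        + apply mglb; apply bj_mono'; intro; lat.
        + apply bj_meet_l. intro x. apply bj_meet_r. intro y.
          apply le_trans with (bigjoin (fun z => proj1_sig I z ⊓ (e x z ⊓ e y z)) ⊓ (C (f x) ⊓ C' (f y))).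
          { apply mglb. eapply le_trans; [|apply (proj2 (RI_dir _ _ I))]. lat. lat. }
          apply bj_meet_l. intro z. apply (le_bj _ _ z). apply mglb. lat. apply mglb.
          * eapply le_trans; [|apply (proj1 (Hf C HC) x z)]. unfold Lpreimage. lat.
          * eapply le_trans; [|apply (proj1 (Hf C' HC') y z)]. unfold Lpreimage. lat.
      - intros S HS. unfold Ppt. apply le_antisym.
        + apply bj_least. intro x. apply bj_meet_r. intros [C HC]. apply (le_bj _ _ (exist _ C HC)).
          apply (le_bj _ _ x). apply le_refl.
        + apply bj_least. intros [C HC]. simpl. apply bj_mono'. intro x. apply mmono. apply le_refl.
          apply (le_bj _ _ (exist _ C HC)). apply le_refl.
      - intro a. unfold Ppt, Lconst. apply le_antisym.
        + apply bj_least. intro. apply mle_r.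
        + rewrite <- (meet_top_l a) at 1. rewrite <- (proj1 (RI_dir _ _ I)). apply distr_r. }
    pose (fb := fun I => proj1_sig (constructive_indefinite_description _ (proj2 HZs (Ppt I) (Hpt I)))).
    exists fb.
    assert (Hfb : forall I C, OZ C -> C (fb I) = Ppt I C).
    { intros I C HC. unfold fb. destruct (constructive_indefinite_description _ _) as [z Hz]. simpl.
      symmetry. auto. }
    split; [|split].
    + intros C HC. replace (Lpreimage fb C) with (fun I : Q0 => bigjoin (fun x => proj1_sig I x ⊓ C (f x))).
      apply hat_open. apply functional_extensionality. intro I. unfold Lpreimage. rewrite (Hfb I C HC). reflexivity.
    + intro x. apply (proj1 HZs). intros C HC. rewrite (Hfb _ C HC). unfold Ppt. simpl.
      pose proof (proj2 (Hf C HC) (wayb e x) x (proj1 (Hc x)) (proj2 (Hc x))) as H. unfold Lpreimage in H.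
      rewrite H.
      f_equal. apply functional_extensionality. intro y. apply mcomm.
    + intros g Hg Hgj I. apply (proj1 HZs). intros C HC. rewrite (Hfb I C HC).
      pose proof (proj2 (Hg C HC) _ I (Limage_j0_dir _ _ He Hc I) (Limage_j0_sup _ _ He Hc I)) as H.
      unfold Lpreimage in H. rewrite H. unfold Ppt.
      replace (fun x => C (g x) ⊓ Limage j0 (proj1_sig I) x) with (fun x => Limage j0 (proj1_sig I) x ⊓ C (g x))
        by (apply functional_extensionality; intro; apply mcomm).
      rewrite Limage_join. f_equal. apply functional_extensionality. intro x. rewrite Hgj. reflexivity.
Qed.
End Model2.

Section Iso.
Context {L : frame}.
Local Notation "a ⊑ b" := (@fle L a b) (at level 70).
Local Notation "a ⊓ b" := (@fmeet L a b) (at level 40, left associativity).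
Local Notation "a ⇒ b" := (@fimp L a b) (at level 55, right associativity).
Variables A B : Type.
Variable eA : A -> A -> L.
Variable eB : B -> B -> L.
Variable h : A -> B.
Variable k : B -> A.
Hypothesis kh : forall a, k (h a) = a.
Hypothesis hk : forall b, h (k b) = b.
Hypothesis Hh : forall a a', eA a a' = eB (h a) (h a').

Lemma Hk : forall b b', eB b b' = eA (k b) (k b').
Proof. intros. rewrite Hh, !hk. reflexivity. Qed.

Lemma bj_reindex (F : A -> L) : bigjoin F = bigjoin (fun b => F (k b)).
Proof.
  apply le_antisym; apply bj_mono.
  - intro a. exists (h a). rewrite kh. apply le_refl.
  - intro b. exists (k b). apply le_refl.
Qed.
Lemma bm_reindex (F : A -> L) : bigmeet F = bigmeet (fun b => F (k b)).
Proof.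
  apply le_antisym; apply bm_mono.
  - intro b. exists (k b). apply le_refl.
  - intro a. exists (h a). rewrite kh. apply le_refl.
Qed.

Lemma iso_dir D : Ldirected eA D -> Ldirected eB (fun b => D (k b)).
Proof.
  intros [Hn Hd]. split.
  - unfold Lnonempty in *. rewrite <- bj_reindex. auto.
  - intros b1 b2. eapply le_trans. apply Hd. rewrite bj_reindex. apply bj_mono'. intro b.
    rewrite !Hh, !hk. apply le_refl.
Qed.

Lemma iso_sup D s : is_sup eA D s -> is_sup eB (fun b => D (k b)) (h s).
Proof.
  intros H b. rewrite Hk, kh, H. unfold Lsub. rewrite bm_reindex. f_equal.
  apply functional_extensionality. intro b'. unfold Ldown. rewrite Hk. reflexivity.
Qed.

Lemma iso_ideal I : Lideal eA I -> Lideal eB (fun b => I (k b)).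
Proof.
  intros [Hd Hl]. split. apply iso_dir; auto. intros x y. rewrite Hk. apply Hl.
Qed.

Lemma iso_Scott_h : Scott_continuous eA eB h.
Proof.
  intros D s _ Hs m. rewrite Lsub_Limage. rewrite Hk, kh, Hs. unfold Lsub. f_equal.
  apply functional_extensionality. intro a. unfold Ldown. rewrite Hh, hk. reflexivity.
Qed.
End Iso.

Section Iso2.
Context {L : frame}.
Local Notation "a ⊑ b" := (@fle L a b) (at level 70).
Local Notation "a ⊓ b" := (@fmeet L a b) (at level 40, left associativity).
Local Notation "a ⇒ b" := (@fimp L a b) (at level 55, right associativity).
Variables A B : Type.
Variable eA : A -> A -> L.
Variable eB : B -> B -> L.
Variable h : A -> B.
Variable k : B -> A.
Hypothesis kh : forall a, k (h a) = a.
Hypothesis hk : forall b, h (k b) = b.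
Hypothesis Hh : forall a a', eA a a' = eB (h a) (h a').
Let Hk' := Hk A B eA eB h k hk Hh.

Lemma iso_wayb x y : wayb eA x y = wayb eB (h x) (h y).
Proof.
  apply le_antisym; unfold wayb; apply bm_glb.
  - intros [[J t] [HJ Ht]]. simpl.
    apply (bm_le _ _ (exist (fun Is : (A -> L) * A => Lideal eA (fst Is) /\ is_sup eA (fst Is) (snd Is))
      (fun a => J (h a), k t) (conj (iso_ideal B A eB eA k h hk kh Hk' J HJ) (iso_sup B A eB eA k h hk kh Hk' J t Ht)))).
    simpl. rewrite Hh, hk. apply le_refl.
  - intros [[I s] [HI Hs]]. simpl.
    apply (bm_le _ _ (exist (fun Is : (B -> L) * B => Lideal eB (fst Is) /\ is_sup eB (fst Is) (snd Is))
      (fun b => I (k b), h s) (conj (iso_ideal A B eA eB h k kh hk Hh I HI) (iso_sup A B eA eB h k kh hk Hh I s Hs)))).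
    simpl. rewrite kh, <- Hh. apply le_refl.
Qed.

Lemma iso_order : is_Lorder eB -> is_Lorder eA.
Proof.
  intros [H1 [H2 H3]]. split; [|split].
  - intro x. rewrite Hh. auto.
  - intros x y z. rewrite !Hh. auto.
  - intros x y H. rewrite !Hh in H. rewrite <- (kh x), <- (kh y). f_equal. auto.
Qed.

Lemma iso_cont : Lcontinuous_ordered eB -> Lcontinuous_ordered eA.
Proof.
  intros Hc a. replace (wayb eA a) with (fun y => wayb eB (h a) (h y))
    by (apply functional_extensionality; intro; symmetry; apply iso_wayb).
  split.
  - apply (iso_dir B A eB eA k h hk kh Hk'). apply Hc.
  - pose proof (iso_sup B A eB eA k h hk kh Hk' _ _ (proj2 (Hc (h a)))) as H.
    rewrite kh in H. exact H.
Qed.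

Lemma iso_dcpo : Ldcpo eB -> Ldcpo eA.
Proof.
  intros Hd D HD. destruct (Hd _ (iso_dir A B eA eB h k kh hk Hh D HD)) as [t Ht].
  exists (k t). pose proof (iso_sup B A eB eA k h hk kh Hk' _ t Ht) as H.
  cbv beta in H.
  replace (fun a => D (k (h a))) with D in H by (apply functional_extensionality; intro; rewrite kh; reflexivity).
  exact H.
Qed.

Lemma iso_Scott_k : Scott_continuous eB eA k.
Proof. exact (iso_Scott_h B A eB eA k h hk kh Hk'). Qed.
End Iso2.

Section Uniq.
Context {L : frame}.

Lemma sob_iso {X Y Y0 : Type} (OX : (X -> L) -> Prop) (OY : (Y -> L) -> Prop) (O0 : (Y0 -> L) -> Prop)
  (j : X -> Y) (j0 : X -> Y0) :
  is_Lsobrification OX OY j -> is_Lsobrification OX O0 j0 ->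
  exists (h : Y -> Y0) (k : Y0 -> Y), Lcontinuous OY O0 h /\ Lcontinuous O0 OY k /\
    (forall x, h (j x) = j0 x) /\ (forall x, k (j0 x) = j x) /\
    (forall y, k (h y) = y) /\ (forall y, h (k y) = y).
Proof.
  intros [HYt [HYs [HYj HYu]]] [H0t [H0s [H0j H0u]]].
  destruct (HYu _ O0 H0t H0s j0 H0j) as [h [Hh [Hhj _]]].
  destruct (H0u _ OY HYt HYs j HYj) as [k [Hk [Hkj _]]].
  exists h, k. split; [auto|split; [auto|split; [auto|split; [auto|split]]]].
  - destruct (HYu _ OY HYt HYs j HYj) as [fb [_ [_ Hu]]]. intro y.
    transitivity (fb y).
    + apply (Hu (fun y => k (h y))). intros B HB. exact (Hh _ (Hk B HB)).
      intro x. rewrite Hhj. auto.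
    + symmetry. apply (Hu (fun y => y)). intros B HB. exact HB. auto.
  - destruct (H0u _ O0 H0t H0s j0 H0j) as [fb [_ [_ Hu]]]. intro y.
    transitivity (fb y).
    + apply (Hu (fun y => h (k y))). intros B HB. exact (Hk _ (Hh B HB)).
      intro x. rewrite Hkj. auto.
    + symmetry. apply (Hu (fun y => y)). intros B HB. exact HB. auto.
Qed.

Lemma dc_iso {P Q Q0 : Type} (eP : P -> P -> L) (eQ : Q -> Q -> L) (e0 : Q0 -> Q0 -> L)
  (j : P -> Q) (j0 : P -> Q0) : is_Lorder eP ->
  is_directed_completion eP eQ j -> is_directed_completion eP e0 j0 ->
  exists (h : Q -> Q0) (k : Q0 -> Q), Scott_continuous eQ e0 h /\ Scott_continuous e0 eQ k /\
    (forall x, h (j x) = j0 x) /\ (forall x, k (j0 x) = j x) /\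
    (forall y, k (h y) = y) /\ (forall y, h (k y) = y).
Proof.
  intros HP [HQo [HQc [HQj HQu]]] [H0o [H0c [H0j H0u]]].
  destruct (HQu _ e0 H0o H0c j0 H0j) as [h [Hh [Hhj _]]].
  destruct (H0u _ eQ HQo HQc j HQj) as [k [Hk [Hkj _]]].
  exists h, k. split; [auto|split; [auto|split; [auto|split; [auto|split]]]].
  - destruct (HQu _ eQ HQo HQc j HQj) as [fb [_ [_ Hu]]]. intro y.
    transitivity (fb y).
    + apply (Hu (fun y => k (h y))). apply (Scott_comp eQ e0 eQ); auto.
      intro x. rewrite Hhj. auto.
    + symmetry. apply (Hu (fun y => y)). apply Scott_id. auto.
  - destruct (H0u _ e0 H0o H0c j0 H0j) as [fb [_ [_ Hu]]]. intro y.
    transitivity (fb y).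
    + apply (Hu (fun y => h (k y))). apply (Scott_comp e0 eQ e0); auto.
      intro x. rewrite Hkj. auto.
    + symmetry. apply (Hu (fun y => y)). apply Scott_id. auto.
Qed.

Lemma spec_homeo {Y Y0 : Type} (OY : (Y -> L) -> Prop) (O0 : (Y0 -> L) -> Prop) h k :
  Lcontinuous OY O0 h -> Lcontinuous O0 OY k -> (forall y, k (h y) = y) ->
  forall a b, spec OY a b = spec O0 (h a) (h b).
Proof.
  intros Hh Hk kh a b. unfold spec. apply le_antisym.
  - apply bm_glb. intros [A HA]. simpl.
    apply (bm_le _ _ (exist (fun B => OY B) (Lpreimage h A) (Hh A HA))). apply le_refl.
  - apply bm_glb. intros [B HB]. simpl.
    apply (bm_le _ _ (exist (fun A => O0 A) (Lpreimage k B) (Hk B HB))). simpl.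
    unfold Lpreimage. rewrite !kh. apply le_refl.
Qed.
End Uniq.

Theorem theorem6p6 (L : frame) (P : Type) (eP : P -> P -> L)
  (Q : Type) (eQ : Q -> Q -> L) :
  is_Lorder eP -> Lcontinuous_ordered eP ->
  is_Lorder eQ -> Lcontinuous_ordered eQ ->
  (* (1) *)
  (forall (Y : Type) (OY : (Y -> L) -> Prop) (j : P -> Y),
     is_Lsobrification (Scott_open eP) OY j ->
     is_directed_completion eP (spec OY) j) /\
  (* (2) *)
  (forall j : P -> Q, is_directed_completion eP eQ j ->
     is_Lsobrification (Scott_open eP) (Scott_open eQ) j) /\
  (* (3) *)
  (forall j : P -> Q, is_directed_completion eP eQ j <->
     is_Lsobrification (Scott_open eP) (Scott_open eQ) j).
Proof.
  intros HP HPc HQ HQc.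
  assert (Part1 : forall (Y : Type) (OY : (Y -> L) -> Prop) (j : P -> Y),
     is_Lsobrification (Scott_open eP) OY j -> is_directed_completion eP (spec OY) j).
  { intros Y OY j HY.
    destruct (sob_iso _ _ _ j (j0 P eP HP HPc) HY (Q0_sob P eP HP HPc)) as [h [k [Hh [Hk [Hhj [Hkj [kh hk]]]]]]].
    assert (Heq : forall a b, spec OY a b = e0 P eP (h a) (h b)).
    { intros a b. rewrite (spec_homeo _ _ h k Hh Hk kh). apply spec_Scott.
      apply e0_order. apply Q0_cont; auto. }
    pose proof (Q0_DC P eP HP HPc) as [H0o [[H0c H0d] [H0j H0u]]].
    assert (HYo : is_Lorder (spec OY)) by (apply (iso_order _ _ _ _ h k kh Heq); auto).
    split; [|split; [|split]].
    - exact HYo.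
    - split. apply (iso_cont _ _ _ _ h k kh hk Heq); auto. apply (iso_dcpo _ _ _ _ h k kh hk Heq); auto.
    - replace j with (fun x => k (j0 P eP HP HPc x)) by (apply functional_extensionality; auto).
      apply (Scott_comp eP (e0 P eP) (spec OY)); auto. apply (iso_Scott_k _ _ _ _ h k kh hk Heq).
    - intros M eM HM HMc f Hf. destruct (H0u M eM HM HMc f Hf) as [fb0 [Hfb0 [Hfb0j Hu]]].
      exists (fun y => fb0 (h y)). split; [|split].
      + apply (Scott_comp (spec OY) (e0 P eP) eM); auto. apply (iso_Scott_h _ _ _ _ h k kh hk Heq).
      + intro x. rewrite Hhj. auto.
      + intros g Hg Hgj y. rewrite <- (kh y) at 1. apply (Hu (fun b => g (k b))).
        * apply (Scott_comp (e0 P eP) (spec OY) eM); auto. apply (iso_Scott_k _ _ _ _ h k kh hk Heq).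
        * intro x. rewrite Hkj. auto. }
  assert (Part2 : forall j : P -> Q, is_directed_completion eP eQ j ->
     is_Lsobrification (Scott_open eP) (Scott_open eQ) j).
  { intros j HD.
    destruct (dc_iso eP eQ (e0 P eP) j (j0 P eP HP HPc) HP HD (Q0_DC P eP HP HPc))
      as [h [k [Hh [Hk [Hhj [Hkj [kh hk]]]]]]].
    destruct HD as [HQo [[HQc' HQd] [HQj _]]].
    pose proof (Q0_sob P eP HP HPc) as [_ [_ [_ H0u]]].
    split; [|split; [|split]].
    - apply Scott_top; auto.
    - apply Scott_sober; auto.
    - apply Scott_to_cont; auto.
    - intros Z OZ HZt HZs f Hf. destruct (H0u Z OZ HZt HZs f Hf) as [fb0 [Hfb0 [Hfb0j Hu]]].
      exists (fun y => fb0 (h y)). split; [|split].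
      + intros B HB. exact (Scott_to_cont _ eQ HQ (e0 P eP) h (e0_order P eP) Hh _ (Hfb0 B HB)).
      + intro x. rewrite Hhj. auto.
      + intros g Hg Hgj y. rewrite <- (kh y) at 1. apply (Hu (fun b => g (k b))).
        * intros B HB. exact (Scott_to_cont _ (e0 P eP) (e0_order P eP) eQ k HQ Hk _ (Hg B HB)).
        * intro x. rewrite Hkj. auto. }
  split; [exact Part1|split; [exact Part2|]].
  intro j. split. apply Part2. intro HS. pose proof (Part1 Q (Scott_open eQ) j HS) as H.
  rewrite (spec_Scott_eq _ _ HQ HQc) in H. exact H.
Qed.
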